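(* For $n\in\mathbb{Z}$, $0<q<1$ and $t>0$, \[\mathbb{P}(\chi+S\le n)=\frac{1}{(-tq^{\frac12+n};q)_\infty},\] where $\chi$ and $S$ are independent random variables with the laws below.
   Context: $(x;q)_\infty=\prod_{j\ge0}(1-xq^j)$, $(x;q)_n=(x;q)_\infty/(xq^n;q)_\infty$, $\theta(x)=(x;q)_\infty(q/x;q)_\infty$. $\chi$ is $\mathbb{Z}_{\ge0}$-valued with $\mathbb{P}(\chi=n)=\frac{q^n}{(q;q)_n}(q;q)_\infty$; $S$ is $\mathbb{Z}$-valued with $\mathbb{P}(S=\ell)=\frac{t^\ell q^{\ell^2/2}}{(q;q)_\infty\theta(-tq^{1/2})}$. *)

(* Defs.v *)
From Stdlib Require Import Reals ZArith.
From Coquelicot Require Import Coquelicot.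
Open Scope R_scope.

Fixpoint qpoch (x q : R) (n : nat) : R :=
  match n with
  | O => 1
  | S m => qpoch x q m * (1 - x * q ^ m)
  end.

Definition qpoch_inf (x q : R) : R := real (Lim_seq (fun n => qpoch x q n)).

Definition qtheta (x q : R) : R := qpoch_inf x q * qpoch_inf (q / x) q.

(* Law of chi on Z_{>=0}: P(chi = n) = q^n/(q;q)_n * (q;q)_oo *)
Definition p_chi (q : R) (n : nat) : R :=
  q ^ n / qpoch q q n * qpoch_inf q q.

(* Law of S on Z: P(S = l) = t^l q^{l^2/2} / ((q;q)_oo theta(-t q^{1/2})) *)
Definition p_S (q t : R) (l : Z) : R :=
  powerRZ t l * Rpower q (IZR (l * l) / 2)
  / (qpoch_inf q q * qtheta (- t * Rpower q (1/2)) q).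

(* P(chi + S <= n) for chi, S independent with the laws above:
   sum_{k >= 0} P(chi = k) * P(S <= n - k),
   with P(S <= m) = sum_{j >= 0} P(S = m - j). *)
Definition p_S_le (q t : R) (m : Z) : R :=
  Series (fun j : nat => p_S q t (m - Z.of_nat j)%Z).

(* Main.v *)
Require Import Defs.
From Stdlib Require Import Reals ZArith Lra Lia.
From Coquelicot Require Import Coquelicot.
Open Scope R_scope.

Lemma is_series_lim (a : nat -> R) (l : R) : is_series a l <-> is_lim_seq (sum_n a) l.
Proof. split; intro H; exact H. Qed.

Lemma pow_le1 x n : 0 <= x <= 1 -> x ^ n <= 1.
Proof. intros h. rewrite <- (pow1 n). apply pow_incr. lra. Qed.

Lemma qpoch_S x q n : qpoch x q (S n) = qpoch x q n * (1 - x * q ^ n).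
Proof. reflexivity. Qed.

Lemma qq_pos q n : 0 < q < 1 -> 0 < qpoch q q n <= 1.
Proof.
  intros [h0 h1]. induction n as [|n IH]; simpl. lra.
  assert (0 < q ^ n <= 1) by (split; [apply pow_lt; lra| apply pow_le1; lra]).
  assert (0 < q * q ^ n < 1) by (split; nra). nra.
Qed.

Lemma qq_decr q n : 0 < q < 1 -> qpoch q q (S n) <= qpoch q q n.
Proof.
  intros hq. simpl. pose proof (qq_pos q n hq).
  assert (0 < q * q ^ n) by (apply Rmult_lt_0_compat; [lra| apply pow_lt; lra]). nra.
Qed.

Lemma qq_lb q n : 0 < q < 1 -> exp (- (q - q ^ (S n)) / ((1 - q) * (1 - q))) <= qpoch q q n.
Proof.
  intros [h0 h1]. induction n as [|n IH].
  - simpl. replace (- (q - q * 1) / ((1 - q) * (1 - q))) with 0 by (field; lra).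
    rewrite exp_0; lra.
  - rewrite qpoch_S.
    set (x := q * q ^ n).
    assert (hx : 0 < x <= q).
    { unfold x; split. apply Rmult_lt_0_compat; [lra|apply pow_lt; lra].
      assert (q ^ n <= 1) by (apply pow_le1; lra). nra. }
    replace (- (q - q ^ S (S n)) / ((1 - q) * (1 - q)))
      with (- (q - q ^ S n) / ((1 - q) * (1 - q)) + - (x / (1 - q))).
    2: { unfold x; simpl. field. lra. }
    rewrite exp_plus.
    assert (h2 : exp (- (x / (1 - q))) <= 1 - x).
    { assert (h3 : 1 + x / (1 - q) <= exp (x / (1 - q))).
      { destruct (Req_dec (x / (1-q)) 0) as [e|e]. rewrite e, exp_0; lra.
        left; apply exp_ineq1; auto. }
      rewrite exp_Ropp.
      assert (h4 : 0 < 1 + x / (1 - q)).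
      { assert (0 < x / (1-q)) by (apply Rdiv_lt_0_compat; lra). lra. }
      assert (h5 : (1 - x) * (1 + x / (1 - q)) >= 1).
      { assert (x * (q - x) / (1 - q) >= 0).
        { apply Rle_ge, Rdiv_le_0_compat; nra. }
        replace ((1 - x) * (1 + x / (1 - q))) with (1 + x * (q - x) / (1 - q)) by (field; lra). lra. }
      apply Rle_trans with (/ (1 + x / (1 - q))).
      apply Rinv_le_contravar; lra.
      apply Rmult_le_reg_r with (1 + x / (1 - q)); auto.
      rewrite Rinv_l by lra. lra. }
    assert (0 < exp (- (q - q ^ S n) / ((1 - q) * (1 - q)))) by apply exp_pos.
    assert (0 < exp (- (x / (1 - q)))) by apply exp_pos.
    apply Rmult_le_compat; lra.
Qed.

Lemma lim_real (u : nat -> R) (l : R) : is_lim_seq u l -> real (Lim_seq u) = l.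
Proof. intro H. rewrite (is_lim_seq_unique _ _ H). reflexivity. Qed.

Lemma Q_lim q : 0 < q < 1 ->
  is_lim_seq (qpoch q q) (qpoch_inf q q) /\ 0 < qpoch_inf q q.
Proof.
  intros hq.
  set (c := exp (- q / ((1 - q) * (1 - q)))).
  assert (hc : forall n, c <= qpoch q q n).
  { intro n. apply Rle_trans with (2 := qq_lb q n hq). unfold c.
    assert (0 < q ^ S n) by (apply pow_lt; lra).
    assert (0 < (1 - q) * (1 - q)) by nra.
    destruct (Rle_lt_or_eq_dec (- q / ((1 - q) * (1 - q))) (- (q - q ^ S n) / ((1 - q) * (1 - q)))).
    { unfold Rdiv. apply Rmult_le_compat_r. left; apply Rinv_0_lt_compat; auto. lra. }
    left; apply exp_increasing; auto. rewrite e; lra. }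
  destruct (decreasing_cv (qpoch q q)) as [l hl].
  { intro n. apply qq_decr; auto. }
  { exists (- c). intros x [n ->]. unfold opp_seq. specialize (hc n). lra. }
  apply is_lim_seq_Reals in hl.
  assert (E : qpoch_inf q q = l) by (unfold qpoch_inf; apply lim_real; exact hl). rewrite E.
  split; auto.
  apply Rlt_le_trans with c. apply exp_pos.
  pose proof (is_lim_seq_le (fun _ => c) (qpoch q q) c l hc (is_lim_seq_const c) hl). exact H.
Qed.

Definition ee (q : R) (k : nat) : R := Rpower q (INR k * (INR k - 1) / 2) / qpoch q q k.
Definition term (q z : R) (k : nat) : R := ee q k * z ^ k.
Definition EE (q z : R) : R := Series (term q z).

Lemma ee_pos q k : 0 < q < 1 -> 0 < ee q k.
Proof.
  intros hq. unfold ee. apply Rdiv_lt_0_compat. apply exp_pos. apply qq_pos; auto.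
Qed.

Lemma Rpower_tri q k : 0 < q ->
  Rpower q (INR (S k) * (INR (S k) - 1) / 2) = Rpower q (INR k * (INR k - 1) / 2) * q ^ k.
Proof.
  intros hq. rewrite <- Rpower_pow by auto. rewrite <- Rpower_plus. f_equal.
  rewrite S_INR. field.
Qed.

Lemma ee_S q k : 0 < q < 1 -> ee q (S k) = q ^ k * ee q k / (1 - q ^ S k).
Proof.
  intros hq. unfold ee. rewrite Rpower_tri by lra. rewrite qpoch_S.
  pose proof (qq_pos q k hq).
  assert (0 < q ^ S k < 1) by (apply pow_lt_1_compat || idtac; split; [apply pow_lt; lra|];
    pose proof (pow_lt_1_compat q (S k)); lra || (apply H0; [lra|lia])).
  simpl in *. field. split; lra.
Qed.

Lemma qS_bounds q k : 0 < q < 1 -> 0 < q ^ S k <= q.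
Proof.
  intros hq. simpl. split. apply Rmult_lt_0_compat; [lra| apply pow_lt; lra].
  pose proof (pow_le1 q k). assert (0 < q^k) by (apply pow_lt; lra). nra.
Qed.

Lemma ex_term q z : 0 < q < 1 -> 0 < z -> ex_series (term q z).
Proof.
  intros hq hz.
  assert (hpos : forall k, 0 < term q z k).
  { intro k. unfold term. apply Rmult_lt_0_compat. apply ee_pos; auto. apply pow_lt; auto. }
  apply ex_series_ext with (fun n => Rabs (term q z n)).
  { intro n. apply Rabs_pos_eq. left; auto. }
  apply ex_series_DAlembert with 0. lra.
  { intro n. specialize (hpos n). lra. }
  apply is_lim_seq_le_le with (fun _ => 0) (fun n => z / (1 - q) * q ^ n).
  { intro n. rewrite Rabs_pos_eq.
    2: { left; apply Rdiv_lt_0_compat; auto. }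
    unfold term. rewrite ee_S by auto. pose proof (qS_bounds q n hq).
    pose proof (ee_pos q n hq). assert (0 < q ^ n) by (apply pow_lt; lra).
    assert (0 < z ^ n) by (apply pow_lt; lra).
    replace (q ^ n * ee q n / (1 - q ^ S n) * z ^ S n / (ee q n * z ^ n))
      with (z * q ^ n / (1 - q ^ S n)) by (simpl in *; field; repeat split; lra).
    split. left; apply Rdiv_lt_0_compat; try lra; nra.
    replace (z / (1 - q) * q ^ n) with (z * q ^ n * / (1 - q)) by (field; lra).
    unfold Rdiv. apply Rmult_le_compat_l. nra. apply Rinv_le_contravar; lra. }
  apply is_lim_seq_const.
  replace (Finite 0) with (Rbar_mult (z / (1 - q)) 0) by (simpl; f_equal; ring).
  apply is_lim_seq_scal_l. apply is_lim_seq_geom. rewrite Rabs_pos_eq; lra.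
Qed.

Lemma term0 q z : 0 < q -> term q z 0 = 1.
Proof.
  intros hq. unfold term, ee. simpl.
  replace (0 * (0 - 1) / 2) with 0 by field. rewrite Rpower_O by auto. field.
Qed.

Lemma term_S q z k : 0 < q < 1 ->
  term q z (S k) = term q (q * z) (S k) + z * term q (q * z) k.
Proof.
  intros hq. unfold term. rewrite !ee_S by auto.
  pose proof (qS_bounds q k hq).
  rewrite !Rpow_mult_distr. simpl in *. field. lra.
Qed.

Lemma EE_fun q z : 0 < q < 1 -> 0 < z -> EE q z = (1 + z) * EE q (q * z).
Proof.
  intros hq hz. assert (hqz : 0 < q * z) by nra.
  pose proof (ex_term q z hq hz) as h1. pose proof (ex_term q (q*z) hq hqz) as h2.
  unfold EE. rewrite (Series_incr_1 (term q z)) by auto.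
  rewrite (Series_incr_1 (term q (q*z))) by auto.
  rewrite !term0 by lra.
  rewrite (Series_ext _ (fun k => term q (q * z) (S k) + z * term q (q * z) k)).
  2: { intro; apply term_S; auto. }
  rewrite Series_plus. rewrite Series_scal_l.
  rewrite (Series_incr_1 (term q (q*z))) by auto. rewrite term0 by lra. ring.
  apply (ex_series_incr_1 (term q (q*z))); auto.
  apply (ex_series_scal_l z (term q (q * z))); auto.
Qed.

Lemma Series_zero : Series (fun _ => 0) = 0.
Proof. rewrite (Series_ext (fun _ => 0) (fun n => 0 * 1)) by (intro; ring). rewrite Series_scal_l. ring. Qed.

Lemma EE_bound q z w : 0 < q < 1 -> 0 < w <= z ->
  1 <= EE q w <= 1 + w / z * (EE q z - 1).
Proof.
  intros hq hw. assert (hz : 0 < z) by lra.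
  pose proof (ex_term q z hq hz) as h1.
  assert (h1' : ex_series (fun k => term q z (S k))) by (apply (ex_series_incr_1 (term q z)); auto).
  unfold EE. rewrite (Series_incr_1 (term q w)) by (apply ex_term; lra).
  rewrite (Series_incr_1 (term q z)) by auto. rewrite !term0 by lra.
  assert (hle : forall k, 0 <= term q w (S k) <= w / z * term q z (S k)).
  { intro k. unfold term. pose proof (ee_pos q (S k) hq).
    split. left; apply Rmult_lt_0_compat; auto; apply pow_lt; lra.
    replace (w ^ S k) with (z ^ S k * (w / z) ^ S k) by (rewrite <- Rpow_mult_distr; f_equal; field; lra).
    assert (0 < z ^ S k) by (apply pow_lt; lra).
    assert ((w/z) ^ S k <= w / z).
    { simpl. assert ((w/z)^k <= 1) by (apply pow_le1; split; [left; apply Rdiv_lt_0_compat; lra| apply (Rdiv_le_1 w z); lra]).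
      assert (0 < w / z) by (apply Rdiv_lt_0_compat; lra). nra. }
    assert (0 < ee q (S k) * z ^ S k) by nra. nra. }
  assert (hs : Series (fun k => term q w (S k)) <= w / z * Series (fun k => term q z (S k))).
  { rewrite <- Series_scal_l. apply Series_le; auto.
    apply (ex_series_scal_l (w/z) (fun k => term q z (S k))); auto. }
  assert (h0 : 0 <= Series (fun k => term q w (S k))).
  { rewrite <- Series_zero. apply Series_le.
    intro k; specialize (hle k); lra.
    apply (ex_series_incr_1 (term q w)); apply ex_term; lra. }
  lra.
Qed.

Lemma qpoch_EE q z N : 0 < q < 1 -> 0 < z -> qpoch (- z) q N * EE q (q ^ N * z) = EE q z.
Proof.
  intros hq hz. induction N as [|N IH].
  - simpl. rewrite !Rmult_1_l. reflexivity.
  - rewrite qpoch_S. rewrite <- IH.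
    assert (0 < q ^ N * z) by (apply Rmult_lt_0_compat; auto; apply pow_lt; lra).
    rewrite (EE_fun q (q ^ N * z)) by auto.
    replace (q ^ S N * z) with (q * (q ^ N * z)) by (simpl; ring). ring.
Qed.

Lemma EE_lim q z : 0 < q < 1 -> 0 < z ->
  is_lim_seq (qpoch (- z) q) (EE q z) /\ qpoch_inf (- z) q = EE q z /\ 1 <= EE q z.
Proof.
  intros hq hz.
  assert (hb : forall N, 1 <= EE q (q ^ N * z) <= 1 + q ^ N * (EE q z - 1)).
  { intro N. assert (0 < q ^ N <= 1) by (split; [apply pow_lt; lra| apply pow_le1; lra]).
    replace (q ^ N * (EE q z - 1)) with (q ^ N * z / z * (EE q z - 1)) by (field; lra).
    apply EE_bound; auto. split; nra. }
  assert (hl : is_lim_seq (fun N => EE q (q ^ N * z)) 1).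
  { apply is_lim_seq_le_le with (fun _ => 1) (fun N => 1 + q ^ N * (EE q z - 1)); auto.
    apply is_lim_seq_const.
    replace (Finite 1) with (Finite (1 + (EE q z - 1) * 0)) by (f_equal; ring).
    apply is_lim_seq_plus'. apply is_lim_seq_const.
    apply is_lim_seq_ext with (fun N => (EE q z - 1) * q ^ N). intro; ring.
    assert (hg : is_lim_seq (fun n => q ^ n) 0) by (apply is_lim_seq_geom; rewrite Rabs_pos_eq; lra).
    pose proof (is_lim_seq_scal_l _ (EE q z - 1) _ hg) as H. simpl in H. exact H. }
  assert (h1 : 1 <= EE q z) by (specialize (hb 0%nat); simpl in hb; rewrite Rmult_1_l in hb; lra).
  assert (hl2 : is_lim_seq (qpoch (- z) q) (EE q z)).
  { apply is_lim_seq_ext with (fun N => EE q z / EE q (q ^ N * z)).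
    { intro N. rewrite <- (qpoch_EE q z N) at 1 by auto. field. specialize (hb N); lra. }
    replace (Finite (EE q z)) with (Finite (EE q z / 1)) by (f_equal; field).
    apply is_lim_seq_div with (EE q z) 1. apply is_lim_seq_const. auto.
    intro e; injection e; lra. reflexivity. }
  split; auto. split; auto. unfold qpoch_inf. apply lim_real. exact hl2.
Qed.

Lemma sum_n_S (a : nat -> R) n : sum_n a (S n) = sum_n a n + a (S n).
Proof. exact (@sum_Sn R_AbelianMonoid a n). Qed.
Lemma sum_n_O (a : nat -> R) : sum_n a 0 = a 0%nat.
Proof. exact (@sum_O R_AbelianMonoid a). Qed.

Section Main.
Variables (q t : R) (hq : 0 < q < 1) (ht : 0 < t).

Definition PP (l : Z) : R := powerRZ t l * Rpower q (IZR (l * l) / 2).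
Definition yy (n : Z) : R := t * Rpower q (1/2 + IZR n).
Definition zz (n : Z) : R := Rpower q (1/2 - IZR n) / t.
Definition phi (n : Z) : R := PP n * EE q (zz n) * EE q (yy n).

Lemma q_Rpower a : q * Rpower q a = Rpower q (1 + a).
Proof. rewrite Rpower_plus, Rpower_1 by lra. reflexivity. Qed.

Lemma yy_pos n : 0 < yy n.
Proof. unfold yy. apply Rmult_lt_0_compat; auto. apply exp_pos. Qed.
Lemma zz_pos n : 0 < zz n.
Proof. unfold zz. apply Rdiv_lt_0_compat; auto. apply exp_pos. Qed.

Lemma phi_S n : phi (n + 1) = phi n.
Proof.
  unfold phi.
  assert (hP : PP (n + 1) = PP n * yy n).
  { unfold PP, yy. rewrite powerRZ_add by lra. simpl.
    replace (IZR ((n + 1) * (n + 1)) / 2) with (IZR (n * n) / 2 + (1/2 + IZR n))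
      by (rewrite !mult_IZR, plus_IZR; simpl; field).
    rewrite Rpower_plus. ring. }
  assert (hz : q * zz (n + 1) = zz n).
  { unfold zz. unfold Rdiv. rewrite <- Rmult_assoc, q_Rpower. f_equal. f_equal.
    rewrite plus_IZR. simpl. ring. }
  assert (hy : q * yy n = yy (n + 1)).
  { unfold yy. rewrite Rmult_comm, Rmult_assoc, (Rmult_comm _ q), q_Rpower.
    rewrite plus_IZR. simpl. f_equal. f_equal. ring. }
  assert (hyz : yy n * zz (n + 1) = 1).
  { unfold yy, zz. field_simplify; [|lra].
    rewrite <- Rpower_plus. replace (1 / 2 + IZR n + (1 / 2 - IZR (n + 1))) with 0
      by (rewrite plus_IZR; simpl; field). rewrite Rpower_O by lra. field. }
  rewrite hP. rewrite (EE_fun q (zz (n + 1))) by (auto; apply zz_pos).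
  rewrite (EE_fun q (yy n)) by (auto; apply yy_pos).
  rewrite hz, hy.
  replace (PP n * yy n * ((1 + zz (n + 1)) * EE q (zz n)) * EE q (yy (n + 1)))
    with (PP n * (yy n + yy n * zz (n + 1)) * EE q (zz n) * EE q (yy (n + 1))) by ring.
  rewrite hyz. ring.
Qed.

Lemma phi_const n : phi n = phi 0.
Proof.
  induction n using Z.peano_ind.
  - reflexivity.
  - rewrite <- Z.add_1_r, phi_S. auto.
  - rewrite <- IHn. rewrite <- (phi_S (Z.pred n)). f_equal. lia.
Qed.

End Main.

Section Main2.
Variables (q t : R) (hq : 0 < q < 1) (ht : 0 < t).

Let s := Rpower q (1/2).
Lemma ss : s * s = q.
Proof. unfold s. rewrite <- Rpower_plus. replace (1/2+1/2) with 1 by field. apply Rpower_1; lra. Qed.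
Lemma s_pos : 0 < s.
Proof. unfold s. apply exp_pos. Qed.

Lemma theta_eq : qtheta (- t * s) q = EE q (t * s) * EE q (s / t).
Proof.
  pose proof s_pos.
  unfold qtheta. replace (- t * s) with (- (t * s)) by ring.
  replace (q / - (t * s)) with (- (s / t)).
  2: { rewrite <- ss. field. lra. }
  rewrite (proj1 (proj2 (EE_lim q (t * s) hq ltac:(nra)))).
  rewrite (proj1 (proj2 (EE_lim q (s / t) hq ltac:(apply Rdiv_lt_0_compat; lra)))). reflexivity.
Qed.

Lemma phi0 : phi q t 0 = EE q (s / t) * EE q (t * s).
Proof.
  unfold phi, PP, zz, yy. simpl. replace (0 * 0 / 2) with 0 by field.
  replace (1/2 - 0) with (1/2) by ring. replace (1/2 + 0) with (1/2) by ring.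
  replace (0 / 2) with 0 by field. rewrite Rpower_O by lra. unfold s. ring.
Qed.

Lemma PP_pred l : PP q t (l - 1) = PP q t l * Rpower q (1/2 - IZR l) / t.
Proof.
  unfold PP. replace (l - 1)%Z with (l + -1)%Z by lia.
  rewrite powerRZ_add by lra. simpl.
  replace (IZR ((l + -1) * (l + -1)) / 2) with (IZR (l * l) / 2 + (1/2 - IZR l))
    by (rewrite !mult_IZR, plus_IZR; simpl; field).
  rewrite Rpower_plus. field. lra.
Qed.

Lemma PP_shift n m : PP q t (n - Z.of_nat m)
  = PP q t n * Rpower q (INR m * (INR m - 1) / 2) * zz q t n ^ m.
Proof.
  induction m as [|m IH].
  - simpl. replace (n - 0)%Z with n by lia. replace (0 * (0 - 1) / 2) with 0 by field.
    rewrite Rpower_O by lra. ring.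
  - replace (n - Z.of_nat (S m))%Z with ((n - Z.of_nat m) - 1)%Z by lia.
    rewrite PP_pred, IH, Rpower_tri by lra.
    unfold zz. simpl.
    rewrite <- (Rpower_pow m q) by lra.
    replace (1 / 2 - IZR (n - Z.of_nat m)) with ((1/2 - IZR n) + INR m)
      by (rewrite minus_IZR, <- INR_IZR_INZ; ring).
    rewrite Rpower_plus. field. lra.
Qed.


Lemma Theta_pos : 0 < qtheta (- t * s) q.
Proof.
  rewrite theta_eq. pose proof s_pos.
  pose proof (proj2 (proj2 (EE_lim q (t * s) hq ltac:(nra)))).
  pose proof (proj2 (proj2 (EE_lim q (s / t) hq ltac:(apply Rdiv_lt_0_compat; lra)))). nra.
Qed.

Lemma dterm n m : p_S q t (n - Z.of_nat m) =
  PP q t n / (qpoch_inf q q * qtheta (- t * s) q) * (term q (zz q t n) m * qpoch q q m).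
Proof.
  unfold p_S. fold s. change (powerRZ t (n - Z.of_nat m) * Rpower q (IZR ((n - Z.of_nat m) * (n - Z.of_nat m)) / 2))
    with (PP q t (n - Z.of_nat m)).
  rewrite PP_shift. unfold term, ee. pose proof (qq_pos q m hq).
  field. split; [lra|]. pose proof Theta_pos. pose proof (proj2 (Q_lim q hq)). split; lra.
Qed.

Lemma PP_pos l : 0 < PP q t l.
Proof. unfold PP. apply Rmult_lt_0_compat. apply powerRZ_lt; lra. apply exp_pos. Qed.

Lemma K_pos n : 0 < PP q t n / (qpoch_inf q q * qtheta (- t * s) q).
Proof.
  pose proof Theta_pos. pose proof (proj2 (Q_lim q hq)). pose proof (PP_pos n).
  apply Rdiv_lt_0_compat; nra.
Qed.

Lemma exS n : ex_series (fun j => p_S q t (n - Z.of_nat j)).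
Proof.
  apply (@ex_series_le _ R_CompleteNormedModule) with (fun j => PP q t n / (qpoch_inf q q * qtheta (- t * s) q) * term q (zz q t n) j).
  { intro j. rewrite dterm. pose proof (K_pos n). pose proof (qq_pos q j hq).
    assert (0 < term q (zz q t n) j).
    { unfold term. apply Rmult_lt_0_compat. apply ee_pos; auto. apply pow_lt, zz_pos; auto. }
    change norm with Rabs. rewrite Rabs_pos_eq.
    2: { left. apply Rmult_lt_0_compat; auto. nra. }
    apply Rmult_le_compat_l. lra. nra. }
  apply (ex_series_scal_l _ (term q (zz q t n))). apply ex_term; auto. apply zz_pos; auto.
Qed.


Lemma main n : is_series (fun k => p_chi q k * p_S_le q t (n - Z.of_nat k))
    (/ qpoch_inf (- t * Rpower q (1/2 + IZR n)) q).
Proof.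
  pose proof (Q_lim q hq) as [hQl hQp].
  pose proof Theta_pos as hTh.
  set (Q := qpoch_inf q q) in *.
  set (Th := qtheta (- t * s) q) in *.
  set (d := fun m => p_S q t (n - Z.of_nat m)).
  set (T := fun k => Series (fun j => d (k + j)%nat)).
  assert (hT : forall k, p_S_le q t (n - Z.of_nat k) = T k).
  { intro k. unfold p_S_le, T, d. apply Series_ext. intro j. f_equal. lia. }
  assert (hexd : ex_series d) by apply exS.
  assert (hexk : forall k, ex_series (fun j => d (k + j)%nat)).
  { intro k. apply (ex_series_incr_n d k). auto. }
  assert (hTS : forall k, T k = d k + T (S k)).
  { intro k. unfold T. rewrite Series_incr_1 by auto. rewrite Nat.add_0_r. f_equal.
    apply Series_ext. intro j. f_equal. lia. }
  assert (hT0 : T 0%nat = Series d) by (unfold T; apply Series_ext; reflexivity).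
  assert (hTn : forall k, T (S k) = Series d - sum_n d k).
  { induction k as [|k IH].
    - rewrite sum_n_O. rewrite <- hT0, (hTS 0%nat). ring.
    - rewrite sum_n_S. replace (Series d - (sum_n d k + d (S k))) with (Series d - sum_n d k - d (S k)) by ring.
      rewrite <- IH. rewrite (hTS (S k)). ring. }
  assert (hTlim : is_lim_seq (fun k => T (S k)) 0).
  { apply is_lim_seq_ext with (fun k => Series d - sum_n d k). intro; auto.
    replace (Finite 0) with (Finite (Series d - Series d)) by (f_equal; ring).
    apply is_lim_seq_minus'. apply is_lim_seq_const.
    apply (Series_correct d hexd). }
  set (C := fun m => Q / qpoch q q m).
  assert (hc : forall m, p_chi q (S m) = C (S m) - C m).
  { intro m. unfold C, p_chi. rewrite qpoch_S. pose proof (qq_pos q m hq).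
    pose proof (qS_bounds q m hq). simpl in *. fold Q. field. split; lra. }
  assert (hc0 : p_chi q 0 = C 0%nat).
  { unfold C, p_chi. simpl. fold Q. field. }
  assert (hAbel : forall K, @eq R (sum_n (fun k => p_chi q k * T k) K)
                   (sum_n (fun m => d m * C m) K + C K * T (S K))).
  { induction K as [|K IH].
    - rewrite !sum_n_O. rewrite hc0, (hTS 0%nat). ring.
    - rewrite !sum_n_S, IH. rewrite hc. rewrite (hTS (S K)). ring. }
  assert (hdC : forall m, d m * C m = PP q t n / Th * term q (zz q t n) m).
  { intro m. unfold d, C. rewrite dterm. fold Q Th. pose proof (qq_pos q m hq).
    field. repeat split; lra. }
  set (L := PP q t n / Th * EE q (zz q t n)).
  assert (hL : is_lim_seq (sum_n (fun m => d m * C m)) L).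
  { apply is_series_lim. apply is_series_ext with (fun m => PP q t n / Th * term q (zz q t n) m).
    { intro m; symmetry; auto. }
    apply (is_series_scal_l (PP q t n / Th) (term q (zz q t n))).
    apply Series_correct. apply ex_term; auto. apply zz_pos; auto. }
  assert (hCl : is_lim_seq C 1).
  { replace (Finite 1) with (Rbar_inv (Finite 1)) by (simpl; f_equal; field).
    unfold C.
    apply is_lim_seq_ext with (fun m => / (qpoch q q m / Q)).
    { intro m. pose proof (qq_pos q m hq). field. split; lra. }
    apply is_lim_seq_inv.
    2: { intro e; injection e; lra. }
    replace (Finite 1) with (Finite (Q * / Q)) by (f_equal; field; lra).
    apply (is_lim_seq_mult' (qpoch q q) (fun _ => / Q)). auto. apply is_lim_seq_const. }
  assert (hprod : is_lim_seq (fun K => C K * T (S K)) (1 * 0)).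
  { apply is_lim_seq_mult'; auto. }
  apply is_series_lim.
  apply is_lim_seq_ext with (fun K => sum_n (fun m => d m * C m) K + C K * T (S K)).
  { intro K. rewrite <- hAbel. apply sum_n_ext. intro k. rewrite hT. reflexivity. }
  replace (/ qpoch_inf (- t * Rpower q (1 / 2 + IZR n)) q) with (L + 1 * 0).
  { apply is_lim_seq_plus'; auto. }
  replace (- t * Rpower q (1 / 2 + IZR n)) with (- yy q t n) by (unfold yy; ring).
  pose proof (EE_lim q (yy q t n) hq (yy_pos q t ht n)) as [_ [-> hE1]].
  pose proof (phi_const q t hq ht n) as hphi. rewrite phi0 in hphi.
  unfold phi in hphi.
  assert (hTh' : Th = PP q t n * EE q (zz q t n) * EE q (yy q t n)) by (unfold Th; rewrite theta_eq, hphi; ring).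
  unfold L. rewrite hTh'.
  pose proof (PP_pos n).
  assert (1 <= EE q (zz q t n)) by (apply (EE_lim q (zz q t n) hq (zz_pos q t ht n))).
  field. repeat split; lra.
Qed.

End Main2.

Theorem lemma2p4 (n : Z) (q t : R) (hq0 : 0 < q) (hq1 : q < 1) (ht : 0 < t) :
  (forall m : Z, ex_series (fun j : nat => p_S q t (m - Z.of_nat j)%Z)) /\
  is_series (fun k : nat => p_chi q k * p_S_le q t (n - Z.of_nat k)%Z)
    (/ qpoch_inf (- t * Rpower q (1/2 + IZR n)) q).
Proof.
  assert (hq : 0 < q < 1) by lra.
  split. intro m. apply exS; auto. apply main; auto.
Qed.
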